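(* For every pair of equations $E,E'$ in the unknowns $x_1,\dots,x_n$ and every $1\le k<\ell\le n$, the polynomial $t_{k\ell}^{E,E'}$ contains at most $2(|E|_{x_k}+|E|_{x_\ell})$ minimal monomials.
   Context: An equation is a pair $E=(u,v)$ of words over $\{x_1,\dots,x_n\}$; $|E|_x=|u|_x+|v|_x$, the number of occurrences of $x$. For $E=(x_{i_1}\cdots x_{i_r},\,x_{j_1}\cdots x_{j_s})$, $S_{E,x_j}=\sum_{a:\,i_a=j}\prod_{t=1}^{a-1}X_{i_t}-\sum_{a:\,j_a=j}\prod_{t=1}^{a-1}X_{j_t}\in\mathbb Z[X_1,\dots,X_n]$ (empty product $=1$), and $t_{k\ell}^{E,E'}=S_{E,x_k}S_{E',x_\ell}-S_{E',x_k}S_{E,x_\ell}$. Writing a polynomial as $p=\sum_\beta c_\beta\mathbf X^\beta$ ($\mathbf X^\beta=\prod X_i^{(\beta)_i}$), a monomial $\mathbf X^\beta$ with $c_\beta\ne0$ is minimal in $p$ if no $\beta'\ne\beta$ with $c_{\beta'}\ne0$ satisfies $\beta'\le\beta$ componentwise; the number of minimal monomials is the number of such $\beta$. *)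

(* Defs.v *)
(* Multivariate integer polynomials are not in the installed
   libraries, so we represent an element of Z[X_1..X_n] as a formal finite sum
   of terms (coefficient, exponent vector); its coefficient at a monomial is the
   sum of the coefficients of the terms carrying that monomial. *)
From HB Require Import structures.
From mathcomp Require Import all_boot all_order all_algebra.
Set Implicit Arguments. Unset Strict Implicit. Unset Printing Implicit Defensive.
Import Order.TTheory GRing.Theory Num.Theory.
Local Open Scope ring_scope.

Definition mono (n : nat) := {ffun 'I_n -> nat}.

Definition mpoly (n : nat) := seq (int * mono n).

Definition mcoef n (p : mpoly n) (b : mono n) : int :=
  \sum_(t <- p | t.2 == b) t.1.

Definition in_supp n (p : mpoly n) (b : mono n) : bool :=
  (b \in map snd p) && (mcoef p b != 0).

Definition mono_le n (b b' : mono n) : bool := [forall i, b i <= b' i]%N.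

Definition minimal_mono n (p : mpoly n) (b : mono n) : bool :=
  in_supp p b &&
  ~~ has (fun b' => [&& b' != b, in_supp p b' & mono_le b' b]) (map snd p).

Definition num_minimal n (p : mpoly n) : nat :=
  count (minimal_mono p) (undup (map snd p)).

Definition mp_mul n (p q : mpoly n) : mpoly n :=
  [seq (a.1 * b.1, ([ffun i => (a.2 i + b.2 i)%N] : mono n)) | a : int * mono n <- p, b : int * mono n <- q].

Definition mp_sub n (p q : mpoly n) : mpoly n :=
  p ++ [seq (- a.1, a.2) | a : int * mono n <- q].

Definition mexp n (s : seq 'I_n) : mono n := [ffun i => count_mem i s].

Definition equation (n : nat) := (seq 'I_n * seq 'I_n)%type.

(* sum over positions a (0-indexed) with s_a = j of X^(s_0 ... s_{a-1}) *)
Definition Sword n (s : seq 'I_n) (j : 'I_n) : mpoly n :=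
  [seq (1%:Z, mexp (take a s)) | a <- iota 0 (size s) & nth j s a == j].

Definition S_E n (E : equation n) (j : 'I_n) : mpoly n :=
  mp_sub (Sword E.1 j) (Sword E.2 j).

Definition t_kl n (E E' : equation n) (k l : 'I_n) : mpoly n :=
  mp_sub (mp_mul (S_E E k) (S_E E' l)) (mp_mul (S_E E' k) (S_E E l)).

Definition occ n (E : equation n) (x : 'I_n) : nat :=
  (count_mem x E.1 + count_mem x E.2)%N.

(* Main.v *)
Require Import Defs.
From mathcomp Require Import all_boot all_order all_algebra.
From mathcomp Require Import zify.
Set Implicit Arguments. Unset Strict Implicit. Unset Printing Implicit Defensive.

Definition addm n (b1 b2 : mono n) : mono n := [ffun i => (b1 i + b2 i)%N].
Definition pos n (s : seq 'I_n) (j : 'I_n) : seq nat :=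
  [seq a <- iota 0 (size s) | nth j s a == j].

Lemma size_pos n (s : seq 'I_n) j : size (pos s j) = count_mem j s.
Proof.
rewrite /pos size_filter.
have -> : count_mem j s = count_mem j (mkseq (nth j s) (size s)) by rewrite mkseq_nth.
by rewrite count_map; apply: eq_count.
Qed.

Lemma mem_snd_Sword n (s : seq 'I_n) j x : x \in map snd (Sword s j) ->
  exists2 a, a \in pos s j & x = mexp (take a s).
Proof. rewrite /Sword -map_comp => /mapP [a Ha ->]. by exists a. Qed.

Lemma map_snd_sub n (p q : mpoly n) : map snd (mp_sub p q) = map snd p ++ map snd q.
Proof. by rewrite /mp_sub map_cat -map_comp. Qed.

Lemma mem_snd_mul n (p q : mpoly n) x : x \in map snd (mp_mul p q) ->
  exists2 y, y \in map snd p & exists2 z, z \in map snd q & x = addm y z.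
Proof.
move=> /mapP [t /allpairsP [[a b] [/= Ha Hb ->]] ->] /=.
exists a.2; first exact: map_f. exists b.2; first exact: map_f. by [].
Qed.

Definition wd n (E : equation n) (w : bool) := if w then E.1 else E.2.

Lemma mem_snd_SE n (E : equation n) j x : x \in map snd (S_E E j) ->
  exists w : bool, exists2 a, a \in pos (wd E w) j & x = mexp (take a (wd E w)).
Proof.
rewrite /S_E map_snd_sub mem_cat => /orP [] /mem_snd_Sword [a Ha ->];
  [exists true|exists false]; by exists a.
Qed.

Definition blk n (E: equation n) (k l : 'I_n) (s w c : bool) : seq (bool*bool*bool*nat) :=
  map (pair (s,w,c)) (pos (wd E w) (if s then k else l)).

Definition tags n (E : equation n) k l :=
  blk E k l true true true ++ blk E k l true true false ++
  blk E k l true false true ++ blk E k l true false false ++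
  blk E k l false true true ++ blk E k l false true false ++
  blk E k l false false true ++ blk E k l false false false.

Lemma mem_pair (T U : eqType) (y : T) (L : seq U) x a :
  ((x,a) \in map (pair y) L) = (x == y) && (a \in L).
Proof.
elim: L => [|u L IH] /=; first by rewrite andbF.
by rewrite !inE IH xpair_eqE andb_orr.
Qed.

Lemma mem_tags n (E : equation n) k l s w c a :
  ((s,w,c),a) \in tags E k l = (a \in pos (wd E w) (if s then k else l)).
Proof.
rewrite /tags /blk !mem_cat !mem_pair.
by case: s; case: w; case: c; rewrite /= ?orbF.
Qed.

Lemma size_tags n (E : equation n) k l : size (tags E k l) = (2 * (occ E k + occ E l))%N.
Proof. rewrite /tags /blk /occ !size_cat !size_map /wd !size_pos. lia. Qed.

Definition Rt n (E E' : equation n) k l (b : mono n) (g : bool*bool*bool*nat) : bool :=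
  let: (s,w,c,a) := g in
  has (fun b' => b == addm (mexp (take a (wd E w))) (mexp (take b' (wd E' c))))
      (pos (wd E' c) (if s then l else k)).

Lemma addmC n (x y : mono n) : addm x y = addm y x.
Proof. by apply/ffunP=> i; rewrite !ffunE addnC. Qed.

Lemma exists_tag n (E E' : equation n) k l x :
  x \in map snd (t_kl E E' k l) -> has (Rt E E' k l x) (tags E k l).
Proof.
rewrite /t_kl map_snd_sub mem_cat => /orP [] /mem_snd_mul [y Hy [z Hz ->]].
- move: Hy Hz => /mem_snd_SE [w [a Ha ->]] /mem_snd_SE [c [b Hb ->]].
  apply/hasP; exists (true,w,c,a); first by rewrite mem_tags.
  by apply/hasP; exists b.
- move: Hy Hz => /mem_snd_SE [c [b Hb ->]] /mem_snd_SE [w [a Ha ->]].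
  apply/hasP; exists (false,w,c,a); first by rewrite mem_tags.
  by apply/hasP; exists b => //; rewrite addmC.
Qed.

Lemma take_le n (s : seq 'I_n) a b : (a <= b)%N -> mono_le (mexp (take a s)) (mexp (take b s)).
Proof.
move=> ab; apply/forallP=> i; rewrite !ffunE.
by rewrite -(subnKC ab) takeD count_cat leq_addr.
Qed.

Lemma addm_le n (P X Y : mono n) : mono_le X Y -> mono_le (addm P X) (addm P Y).
Proof. by move=> /forallP H; apply/forallP=> i; rewrite !ffunE leq_add2l. Qed.

Lemma Rt_cmp n (E E' : equation n) k l x y g :
  Rt E E' k l x g -> Rt E E' k l y g -> mono_le x y || mono_le y x.
Proof.
case: g => [[[s w] c] a] /= /hasP [b1 _ /eqP ->] /hasP [b2 _ /eqP ->].
case: (leqP b1 b2) => h; apply/orP; [left|right]; apply: addm_le; apply: take_le => //.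
exact: ltnW.
Qed.

Lemma minimal_antisym n (p : mpoly n) x y :
  minimal_mono p x -> minimal_mono p y -> mono_le x y -> x = y.
Proof.
move=> /andP [Sx _] /andP [_ Hy] le. apply/eqP; apply: contraNT Hy => ne.
apply/hasP; exists x; first by case/andP: Sx.
by rewrite ne Sx le.
Qed.

Theorem lemma4p4 (n : nat) (E E' : equation n) (k l : 'I_n) :
  (k < l)%N ->
  (num_minimal (t_kl E E' k l) <= 2 * (occ E k + occ E l))%N.
Proof.
move=> _. set p := t_kl E E' k l.
rewrite /num_minimal -size_filter.
set L := [seq x <- undup (map snd p) | minimal_mono p x].
have HL x : x \in L -> minimal_mono p x /\ has (Rt E E' k l x) (tags E k l).
  rewrite mem_filter mem_undup => /andP [Hm Hx]; split => //; exact: exists_tag.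
pose f x := nth ((true,true,true),0%N) (tags E k l) (find (Rt E E' k l x) (tags E k l)).
have fR x : x \in L -> Rt E E' k l x (f x) by move=> /HL [_ h]; exact: nth_find.
have fin x : x \in L -> f x \in tags E k l by move=> /HL [_ h]; rewrite mem_nth // -has_find.
have inj : {in L &, injective f}.
  move=> x y Hx Hy fxy.
  move: (fR x Hx); rewrite fxy => Rx.
  have [mx _] := HL x Hx; have [my _] := HL y Hy.
  case/orP: (Rt_cmp Rx (fR y Hy)) => h; first exact: minimal_antisym mx my h.
  by symmetry; exact: minimal_antisym my mx h.
rewrite -(size_map f) -size_tags; apply: uniq_leq_size.
  by rewrite map_inj_in_uniq // filter_uniq // undup_uniq.
by move=> _ /mapP [x Hx ->]; exact: fin.
Qed.
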